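(* Let $r,s\ge0$, $\Delta=(v(y_1),\dots,v(y_n))$, $F\subset\{1,\dots,n\}$ with $r+2s+|F|=|\Delta|-1$, and let $\mathcal{P}$ be a collection of conditions (points $P_1,\dots,P_{r+s}$ and lines $Q_j$, $j\in F$) in general position for $\mathrm{ev}_F$ on the closure of refined descendant curves and for the tropical descendant count below. Let $\alpha=(\alpha_1,\alpha_2,\dots)$ with $\alpha_i=\#\{j\in F: w(y_j)=i\}$, $I^\alpha=\prod_i i^{\alpha_i}$, $O_f=\{i\in F: w(y_i)\text{ odd}\}$, $O_n=\{i\notin F: w(y_i)\text{ odd}\}$. Then $$N^{desc}_{(r,s)}(1,\Delta,F,\mathcal{P})=\frac{\prod_{i\in O_f}w(y_i)}{\prod_{i\in O_n}w(y_i)}\;I^\alpha\;\widetilde N^{\mathrm{trop}}_{\Delta,(r,s,0,0,\dots)}(\alpha).$$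
   Context: Curves. An $(r,s)$-marked curve of degree $\Delta$ is $C=(\Gamma,h,x_1,\dots,x_{r+s})$ with $\Gamma$ a metric graph whose components are trees, $h:\Gamma\to\mathbb{R}^2$ continuous, affine with integral direction vectors on edges, balanced at vertices; $x_1,\dots,x_r$ (real) and $x_{r+1},\dots,x_{r+s}$ (complex) are contracted unbounded edges (markings), the other unbounded edges $y_1,\dots,y_n$ (labeled ends) have outward direction vectors $\Delta=(v(y_1),\dots,v(y_n))$. Weight $w(e)$ = gcd of coordinates of the direction vector. Mikhalkin multiplicity of a vertex with exactly three non-contracted edges of direction vectors $u,v,w$: $a=|\det(u,v)|$. $\mathcal{M}_{(r,s)}(\Delta)$ is the polyhedral complex of connected such curves. $\mathrm{ev}_F(C)=(h(x_1),\dots,h(x_{r+s}),(h(y_i))_{i\in F})\in(\mathbb{R}^2)^{r+s}\times\prod_{i\in F}\mathbb{R}^2/\langle v(y_i)\rangle$; general position means avoiding images of cells whose image has dimension $<2(r+s)+|F|$. $G(\Delta,F)$: permutations of $\{1,\dots,n\}$ fixing $F$ pointwise and preserving $v(y_i)$. Unoriented refined broccoli curve: vertices of types (I') 3-valent with real marking, $m_V(y)=1$; (II') 3-valent unmarked, $m_V(y)=\frac{y^{a/2}-y^{-a/2}}{y^{1/2}-y^{-1/2}}$; (III') 4-valent with complex marking, $m_V(y)=\frac{y^{a/2}+y^{-a/2}}{y^{1/2}+y^{-1/2}}$. End factors: $m_{y_i}(y)=\frac{y^{w(y_i)/2}+(-1)^{w(y_i)}y^{-w(y_i)/2}}{y^{1/2}+(-1)^{w(y_i)}y^{-1/2}}$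 for $i\in F$ and $m_{y_i}(y)=\frac{y^{w(y_i)/2}-(-1)^{w(y_i)}y^{-w(y_i)/2}}{w(y_i)(y^{1/2}-(-1)^{w(y_i)}y^{-1/2})}$ for $i\notin F$; $m_C(y)=\prod_i m_{y_i}(y)\prod_V m_V(y)$. Refined descendant curve: a curve in $\mathcal{M}_{(r,s)}(\Delta)$ whose real markings are each adjacent to a 3-valent vertex of $\Gamma$ and whose complex markings are each adjacent to a 4-valent vertex of $\Gamma$; for conditions in general position these coincide with the unoriented refined broccoli curves through them. $N^{desc}_{(r,s)}(y,\Delta,F,\mathcal{P})=\frac{1}{|G(\Delta,F)|}\sum_C m_C(y)$ over refined descendant curves $C$ with $\mathrm{ev}_F(C)=\mathcal P$. Tropical descendant invariant: with $m=r+s$ markings and $\mathbf{k}=(r,s,0,\dots)$, $\widetilde N^{\mathrm{trop}}_{\Delta,\mathbf{k}}(\alpha)=\frac{1}{I^\alpha}\frac{1}{|G(\Delta,F)|}\sum_C m^{desc}_C$, where the sum runs over connected rational $m$-marked tropical curves $C$ of degree $\Delta$ (all ends labeled) with $h(x_i)=P_i$, with $x_1,\dots,x_r$ adjacent to 3-valent vertices and $x_{r+1},\dots,x_{r+s}$ adjacent to 4-valent vertices of $\Gamma$, with $h(y_j)\in Q_j$ for $j\in F$, and all vertices not adjacent to a marking 3-valent; and $m^{desc}_C$ is the product of the Mikhalkin multiplicities of the 3-valent vertices not adjacent to a marking. *)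

(* Defs.v *)
From HB Require Import structures.
From mathcomp Require Import all_boot all_order all_algebra all_fingroup fraction.
From Stdlib Require List.
Set Implicit Arguments. Unset Strict Implicit. Unset Printing Implicit Defensive.
Import Order.TTheory GRing.Theory Num.Theory.
Local Open Scope ring_scope.

Definition ivec := (int * int)%type.
Definition idet (u v : ivec) : int := u.1 * v.2 - u.2 * v.1.
Definition iweight (u : ivec) : nat := gcdn `|u.1|%N `|u.2|%N.

(* Parametrized rational tropical curves in R^2 (labelled, marked).    *)
(* Vertices 'I_nv, bounded edges 'I_nb (edge e goes from csrc e to      *)
(* ctgt e, with integral direction vector cdir e and length clen e, so  *)
(* that h(ctgt e) = h(csrc e) + clen e * cdir e).  The marking x_i      *)
(* (a contracted end) is attached at vertex cmk i, the labelled end y_j *)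
(* (direction Delta j) at vertex cen j.  cpos v = h(v).                 *)
Record curve (R : Type) (m n : nat) := Curve {
  nv : nat;
  nb : nat;
  csrc : 'I_nb -> 'I_nv;
  ctgt : 'I_nb -> 'I_nv;
  cdir : 'I_nb -> ivec;
  clen : 'I_nb -> R;
  cpos : 'I_nv -> R * R;
  cmk : 'I_m -> 'I_nv;
  cen : 'I_n -> 'I_nv
}.
Arguments nv {R m n} _.
Arguments nb {R m n} _.
Arguments csrc {R m n} _ _.
Arguments ctgt {R m n} _ _.
Arguments cdir {R m n} _ _.
Arguments clen {R m n} _ _.
Arguments cpos {R m n} _ _.
Arguments cmk {R m n} _ _.
Arguments cen {R m n} _ _.

Section Tropical.
Variable R : realFieldType.
Variables (r s n : nat).
Local Notation m := (r + s)%N.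
Variable Delta : 'I_n -> ivec.
Variable F : {set 'I_n}.

Implicit Type C : curve R m n.

Definition adj C : rel 'I_(nv C) := fun u v =>
  [exists e, ((csrc C e == u) && (ctgt C e == v)) || ((csrc C e == v) && (ctgt C e == u))].

Definition valence C (v : 'I_(nv C)) : nat :=
  (#|[set e | csrc C e == v]| + #|[set e | ctgt C e == v]|
   + #|[set j | cen C j == v]| + #|[set i | cmk C i == v]|)%N.

Definition out_dirs C (v : 'I_(nv C)) : seq ivec :=
  [seq cdir C e | e <- enum 'I_(nb C) & csrc C e == v]
  ++ [seq (- (cdir C e).1, - (cdir C e).2) | e <- enum 'I_(nb C) & ctgt C e == v]
  ++ [seq Delta j | j <- enum 'I_n & cen C j == v].

Definition vsum (l : seq ivec) : ivec :=
  foldr (fun u acc => (u.1 + acc.1, u.2 + acc.2)) (0, 0) l.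

Definition is_curve C : Prop :=
  [/\ nv C = (nb C).+1 /\
      (forall u v : 'I_(nv C), connect (@adj C) u v),
      (forall e, 0 < clen C e),
      (forall e, cpos C (ctgt C e) =
                 ((cpos C (csrc C e)).1 + clen C e * ((cdir C e).1)%:~R,
                  (cpos C (csrc C e)).2 + clen C e * ((cdir C e).2)%:~R)),
      (forall v : 'I_(nv C), vsum (out_dirs v) = (0, 0)) &
      (forall v : 'I_(nv C), 3 <= valence v)%N].

Definition curve_iso C C' : Prop :=
  exists (sg : 'I_(nv C) -> 'I_(nv C')) (tau : 'I_(nb C) -> 'I_(nb C')),
    [/\ bijective sg /\ bijective tau,
        (forall v, cpos C' (sg v) = cpos C v),
        (forall i, cmk C' i = sg (cmk C i)),
        (forall j, cen C' j = sg (cen C j)) &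
        (forall e, clen C' (tau e) = clen C e /\
           ((csrc C' (tau e) = sg (csrc C e) /\ ctgt C' (tau e) = sg (ctgt C e)
             /\ cdir C' (tau e) = cdir C e) \/
            (csrc C' (tau e) = sg (ctgt C e) /\ ctgt C' (tau e) = sg (csrc C e)
             /\ cdir C' (tau e) = (- (cdir C e).1, - (cdir C e).2))))].

Definition is_real_mk (i : 'I_m) : bool := (i < r)%N.

Definition has_real_mk C (v : 'I_(nv C)) : bool :=
  [exists i, is_real_mk i && (cmk C i == v)].
Definition has_cplx_mk C (v : 'I_(nv C)) : bool :=
  [exists i, ~~ is_real_mk i && (cmk C i == v)].
Definition has_mk C (v : 'I_(nv C)) : bool := [exists i, cmk C i == v].

Definition refined_desc C : Prop :=
  forall i : 'I_m, valence (cmk C i) = (if is_real_mk i then 3 else 4)%N.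

Definition trop_desc C : Prop :=
  refined_desc C /\ forall v : 'I_(nv C), ~~ has_mk v -> valence v = 3%N.

(* passing through the conditions: points P_i, lines
   Q_j = { p | det(p, v(y_j)) = q j } (parallel to v(y_j)), j in F *)
Definition rdet (p : R * R) (u : ivec) : R := p.1 * (u.2)%:~R - p.2 * (u.1)%:~R.

Definition passes C (P : 'I_m -> R * R) (q : 'I_n -> R) : Prop :=
  (forall i, cpos C (cmk C i) = P i) /\
  (forall j, j \in F -> rdet (cpos C (cen C j)) (Delta j) = q j).

Definition mikh C (v : 'I_(nv C)) : nat :=
  match [seq u <- out_dirs v | u != (0, 0)] with
  | [:: u1; u2; _] => `|idet u1 u2|%N
  | _ => 0%N
  end.

(* Coordinates on the cell of the combinatorial type of C:
   row vectors (X | Y | l) in R^(nv + nv + nb).  Constraint matrix of the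
   face of the closure of the cell where the edges in Z have length 0:
   columns = x-equations, y-equations, (l_e = 0 for e in Z). *)
Definition CX C : 'M[R]_(nv C, nb C) :=
  \matrix_(v, e) ((v == ctgt C e)%:R - (v == csrc C e)%:R).

Definition face_mx C (Z : {set 'I_(nb C)}) : 'M[R]_(nv C + nv C + nb C, nb C + nb C + nb C) :=
  col_mx
    (col_mx (row_mx (row_mx (CX C) 0) 0) (row_mx (row_mx 0 (CX C)) 0))
    (row_mx (row_mx (diag_mx (\row_e (- ((cdir C e).1)%:~R)))
                    (diag_mx (\row_e (- ((cdir C e).2)%:~R))))
            (diag_mx (\row_e (e \in Z)%:R))).

(* linear part of ev_F : (h(x_i))_i in R^2, (det(h(y_j), v(y_j)))_(j in F) *)
Definition ev_mx C : 'M[R]_(nv C + nv C + nb C, m + m + n) :=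
  col_mx
    (col_mx
       (row_mx (row_mx (\matrix_(v, i) (v == cmk C i)%:R) 0)
               (\matrix_(v, j) (if (j \in F) && (v == cen C j)
                                then ((Delta j).2)%:~R else 0)))
       (row_mx (row_mx 0 (\matrix_(v, i) (v == cmk C i)%:R))
               (\matrix_(v, j) (if (j \in F) && (v == cen C j)
                                then - ((Delta j).1)%:~R else 0))))
    0.

(* dimension of ev_F(face) *)
Definition face_ev_dim C (Z : {set 'I_(nb C)}) : nat :=
  \rank (kermx (face_mx Z) *m ev_mx C).

Definition face_hits C (Z : {set 'I_(nb C)}) P q : Prop :=
  exists (X Y : 'I_(nv C) -> R) (l : 'I_(nb C) -> R),
    [/\ (forall e, X (ctgt C e) = X (csrc C e) + l e * ((cdir C e).1)%:~R /\
                   Y (ctgt C e) = Y (csrc C e) + l e * ((cdir C e).2)%:~R),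
        (forall e, e \in Z -> l e = 0),
        (forall e, e \notin Z -> 0 < l e),
        (forall i, (X (cmk C i), Y (cmk C i)) = P i) &
        (forall j, j \in F -> rdet (X (cen C j), Y (cen C j)) (Delta j) = q j)].

Definition full_dim : nat := (2 * m + #|F|)%N.

Definition gen_pos_refined P q : Prop :=
  forall C, is_curve C -> refined_desc C ->
  forall Z : {set 'I_(nb C)}, face_hits Z P q -> (full_dim <= face_ev_dim Z)%N.

Definition gen_pos_trop P q : Prop :=
  forall C, is_curve C -> trop_desc C ->
  face_hits (set0 : {set 'I_(nb C)}) P q -> (full_dim <= face_ev_dim (set0 : {set 'I_(nb C)}))%N.

(* finite sums over isomorphism classes: L is a list of pairwise
   non-isomorphic representatives of all curves satisfying S *)
Definition enumerates (S : curve R m n -> Prop) (L : seq (curve R m n)) : Prop :=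
  [/\ List.Forall S L,
      List.ForallOrdPairs (fun C C' => ~ curve_iso C C') L &
      forall C, S C -> exists2 C', List.In C' L & curve_iso C C'].

Definition Gcard : nat :=
  #|[set g : {perm 'I_n} | [forall i, ((i \in F) ==> (g i == i)) && (Delta (g i) == Delta i)]]|.

Definition w (j : 'I_n) : nat := iweight (Delta j).

(* rational functions in t = y^(1/2) *)
Definition K := {fraction {poly rat}}.
Definition tofracp (p : {poly rat}) : K := @FracField.tofrac _ p.
Definition tt : K := tofracp 'X.

Definition mII (a : nat) : K := (tt ^+ a - tt ^- a) / (tt - tt^-1).
Definition mIII (a : nat) : K := (tt ^+ a + tt ^- a) / (tt + tt^-1).

Definition mend (j : 'I_n) : K :=
  let wj := w j in
  if j \in F then
    (tt ^+ wj + (-1) ^+ wj * tt ^- wj) / (tt + (-1) ^+ wj * tt^-1)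
  else
    (tt ^+ wj - (-1) ^+ wj * tt ^- wj) / (wj%:R * (tt - (-1) ^+ wj * tt^-1)).

Definition mvert C (v : 'I_(nv C)) : K :=
  if has_real_mk v then 1
  else if has_cplx_mk v then mIII (mikh v)
  else mII (mikh v).

Definition mC C : K := (\prod_(j < n) mend j) * \prod_(v < nv C) mvert v.

Definition Ndesc (L : seq (curve R m n)) : K :=
  (Gcard%:R)^-1 * \sum_(C <- L) mC C.

(* value of a rational function at t = 1 (i.e. y = 1) *)
Definition value_at1 (f : K) (c : rat) : Prop :=
  exists p q : {poly rat}, [/\ q.[1] != 0, f = tofracp p / tofracp q & c = p.[1] / q.[1]].

Definition mdesc C : nat :=
  \prod_(v < nv C | ~~ has_mk v && (valence v == 3%N)) mikh v.

Definition alpha (i : nat) : nat := #|[set j in F | w j == i]|.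
Definition Ialpha : nat :=
  \prod_(1 <= i < (\max_(j < n) w j).+1) i ^ alpha i.

Definition Ntrop (L : seq (curve R m n)) : rat :=
  (Ialpha%:R)^-1 * (Gcard%:R)^-1 * \sum_(C <- L) (mdesc C)%:R.

Definition Of_prod : nat := \prod_(j in F | odd (w j)) w j.
Definition On_prod : nat := \prod_(j | (j \notin F) && odd (w j)) w j.

End Tropical.

(* Main.v *)
Require Import Defs.
From HB Require Import structures.
From mathcomp Require Import all_boot all_order all_algebra all_fingroup fraction.
From mathcomp Require Import ring lra zify.
From Stdlib Require Import ClassicalEpsilon.
From Stdlib Require List.
Import Order.TTheory GRing.Theory Num.Theory.

Section SAlg.
Local Open Scope ring_scope.

Lemma tofracp_neq0 {p : {poly rat}} {c : rat} : p.[c] != 0 -> tofracp p != 0.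
Proof.
move=> h; rewrite /tofracp tofrac_eq0; apply: contra h => /eqP ->.
by rewrite horner0.
Qed.

Lemma v1_eq f c d : value_at1 f c -> c = d -> value_at1 f d.
Proof. move=> h e; rewrite -e; exact: h. Qed.

Lemma v1_eqK f g c : value_at1 f c -> f = g -> value_at1 g c.
Proof. move=> h e; rewrite -e; exact: h. Qed.

Lemma v1_poly p : value_at1 (tofracp p) p.[1].
Proof.
exists p, 1; split.
- by rewrite hornerE oner_neq0.
- rewrite /tofracp rmorph1 divr1; reflexivity.
- by rewrite hornerE divr1.
Qed.

Lemma v1_add f g c d : value_at1 f c -> value_at1 g d -> value_at1 (f + g) (c + d).
Proof.
move=> [p [q [hq -> ->]]] [p' [q' [hq' -> ->]]].
exists (p * q' + p' * q), (q * q'); split.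
- by rewrite hornerM mulf_neq0.
- have h1 := tofracp_neq0 hq; have h2 := tofracp_neq0 hq'.
  rewrite /tofracp in h1 h2 *.
  rewrite (addf_div _ _ h1 h2) tofracD !tofracM; reflexivity.
- rewrite hornerD !hornerM (addf_div _ _ hq hq'); reflexivity.
Qed.

Lemma v1_mul f g c d : value_at1 f c -> value_at1 g d -> value_at1 (f * g) (c * d).
Proof.
move=> [p [q [hq -> ->]]] [p' [q' [hq' -> ->]]].
exists (p * p'), (q * q'); split.
- by rewrite hornerM mulf_neq0.
- rewrite mulf_div /tofracp !tofracM; reflexivity.
- rewrite mulf_div !hornerM; reflexivity.
Qed.

Lemma v1_opp f c : value_at1 f c -> value_at1 (- f) (- c).
Proof.
move=> [p [q [hq -> ->]]].
exists (- p), q; split.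
- exact: hq.
- rewrite /tofracp tofracN mulNr; reflexivity.
- rewrite hornerN mulNr; reflexivity.
Qed.

Lemma v1_inv f c : value_at1 f c -> c != 0 -> value_at1 f^-1 c^-1.
Proof.
move=> [p [q [hq -> ->]]] hc.
have hp : p.[1] != 0 by apply: contra hc => /eqP ->; rewrite mul0r.
exists q, p; split.
- exact: hp.
- rewrite invf_div; reflexivity.
- rewrite invf_div; reflexivity.
Qed.

Lemma v1_one : value_at1 1 1.
Proof. have := v1_poly 1; rewrite hornerC /tofracp tofrac1; exact. Qed.

Lemma v1_exp f c k : value_at1 f c -> value_at1 (f ^+ k) (c ^+ k).
Proof.
move=> h; elim: k => [|k ih].
- rewrite !expr0; exact: v1_one.
- rewrite !exprS; exact: v1_mul.
Qed.

Lemma v1_nat k : value_at1 (k%:R) (k%:R).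
Proof.
have := v1_poly (k%:R%:P); rewrite hornerC /tofracp polyC_natr rmorph_nat; exact.
Qed.

Lemma v1_tt : value_at1 tt 1.
Proof. have := v1_poly 'X; rewrite hornerX; exact. Qed.

Lemma v1_sum (I : Type) (L : seq I) (P : pred I) (f : I -> K) (c : I -> rat) :
  (forall i, P i -> value_at1 (f i) (c i)) ->
  value_at1 (\sum_(i <- L | P i) f i) (\sum_(i <- L | P i) c i).
Proof.
move=> h; apply: (big_ind2 value_at1).
- exact: (v1_nat 0).
- move=> *; exact: v1_add.
- exact: h.
Qed.

Lemma v1_prod (I : Type) (L : seq I) (P : pred I) (f : I -> K) (c : I -> rat) :
  (forall i, P i -> value_at1 (f i) (c i)) ->
  value_at1 (\prod_(i <- L | P i) f i) (\prod_(i <- L | P i) c i).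
Proof.
move=> h; apply: (big_ind2 value_at1).
- exact: v1_one.
- move=> *; exact: v1_mul.
- exact: h.
Qed.

Lemma tt_neq0 : tt != 0.
Proof. apply: (@tofracp_neq0 _ 1); by rewrite hornerX. Qed.

Lemma v1_ttinv : value_at1 tt^-1 1.
Proof. rewrite -[X in value_at1 _ X]invr1; apply: v1_inv; [exact: v1_tt|exact: oner_neq0]. Qed.

Lemma v1_ttX k : value_at1 (tt ^+ k) 1.
Proof. rewrite -(expr1n _ k); apply: v1_exp; exact: v1_tt. Qed.

Lemma v1_ttXV k : value_at1 (tt ^- k) 1.
Proof.
rewrite -[X in value_at1 _ X]invr1; apply: v1_inv; [exact: v1_ttX|exact: oner_neq0].
Qed.

Lemma two_neq0 : (1 + 1 : rat) != 0. Proof. by []. Qed.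

Lemma v1_mIII a : value_at1 (mIII a) 1.
Proof.
rewrite /mIII; apply: (@v1_eq _ ((1 + 1) * (1 + 1)^-1)); last by rewrite mulfV.
apply: v1_mul; first by apply: v1_add; [exact: v1_ttX|exact: v1_ttXV].
apply: v1_inv; last exact: two_neq0.
apply: v1_add; [exact: v1_tt|exact: v1_ttinv].
Qed.

Lemma fld (Fl : fieldType) (x y z S : Fl) : x != 0 -> y != 0 -> z != 0 ->
  (z * S / y) / (z / x) = S * x / y.
Proof. move=> hx hy hz. field. rewrite hz hy hx. reflexivity. Qed.

Lemma mII_gen (Fl : fieldType) (x y S : Fl) : x != 0 -> y != 0 -> x * x - 1 != 0 ->
 y * y - 1 = (x * x - 1) * S ->
  (y - y^-1) / (x - x^-1) = S * x / y.
Proof.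
move=> hx hy hxx H.
have e1 : y - y^-1 = (y * y - 1) / y by rewrite mulrBl (mulfK hy) mul1r.
have e2 : x - x^-1 = (x * x - 1) / x by rewrite mulrBl (mulfK hx) mul1r.
rewrite e1 e2 H; exact: fld.
Qed.

Lemma ttsq_neq0 : tt * tt - 1 != 0.
Proof.
  have -> : tt * tt - 1 = tofracp ('X * 'X - 1).
    rewrite /tofracp tofracB tofracM tofrac1. reflexivity.
  apply: (@tofracp_neq0 _ 0). by rewrite !hornerE oppr_eq0 oner_eq0.
Qed.

Lemma mII_eq a : mII a =
  (\sum_(i < a) (tt ^+ 2) ^+ (a.-1 - i) * 1 ^+ i) * tt / tt ^+ a.
Proof.
have H := subrXX (tt ^+ 2) 1 a.
rewrite expr1n -exprM mulnC exprM expr2 in H.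
rewrite /mII; apply: mII_gen.
- exact: tt_neq0.
- exact: expf_neq0 _ tt_neq0.
- exact: ttsq_neq0.
- exact: H.
Qed.
Lemma v1_mII a : value_at1 (mII a) a%:R.
Proof.
rewrite mII_eq; apply: (@v1_eq _ ((\sum_(i < a) 1 ^+ (a.-1 - i) * 1 ^+ i) * 1 * 1^-1)).
  apply: v1_mul; last by apply: v1_inv; [exact: v1_ttX|exact: oner_neq0].
  apply: v1_mul; last exact: v1_tt.
  apply: v1_sum => i _; apply: v1_mul; last by apply: v1_exp; exact: (v1_nat 1).
  rewrite -[X in value_at1 _ (X ^+ _)](expr1n _ 2); apply: v1_exp; apply: v1_exp; exact: v1_tt.
rewrite invr1 !mulr1. under eq_bigr do rewrite !expr1n mulr1.
by rewrite sumr_const card_ord.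
Qed.

End SAlg.

Section SEnds.
Local Open Scope ring_scope.

Lemma divM_gen (Fl : fieldType) (x c y : Fl) : x / (c * y) = x / y * c^-1.
Proof. by rewrite invfM mulrA mulrAC. Qed.

Lemma two_inv_gen (Fl : fieldType) (c : Fl) : c != 0 -> (1 + 1 : Fl) != 0 ->
  (1 + 1) * (c * (1 + 1))^-1 = c^-1.
Proof. move=> hc h2. field. rewrite h2 hc. reflexivity. Qed.

Lemma w_gt0 {n} {Delta : 'I_n -> ivec} {j} : Delta j != (0, 0) -> (0 < w Delta j)%N.
Proof.
rewrite /w /iweight gcdn_gt0 !absz_gt0 => h.
case: (Delta j) h => a b /=; apply: contraR; rewrite negb_or !negbK.
by move=> /andP [/eqP -> /eqP ->].
Qed.

Definition endv {n} (Delta : 'I_n -> ivec) (F : {set 'I_n}) (j : 'I_n) : rat :=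
  if j \in F then (if odd (w Delta j) then (w Delta j)%:R else 1)
  else (if odd (w Delta j) then ((w Delta j)%:R)^-1 else 1).

Lemma v1_mend {n} (Delta : 'I_n -> ivec) (F : {set 'I_n}) j :
  Delta j != (0, 0) -> value_at1 (mend Delta F j) (endv Delta F j).
Proof.
move=> hD; have hw := w_gt0 hD.
rewrite /mend /endv; set wj := w Delta j.
have hwQ : (wj%:R : rat) != 0 by rewrite pnatr_eq0 -lt0n.
case: (j \in F); case ho: (odd wj).
- rewrite -signr_odd ho expr1 !mulN1r.
  change (value_at1 (mII wj) wj%:R); exact: v1_mII.
- rewrite -signr_odd ho expr0 !mul1r.
  change (value_at1 (mIII wj) 1); exact: v1_mIII.
- rewrite -signr_odd ho expr1 !mulN1r !opprK.
  apply: (@v1_eq _ ((1 + 1) * (wj%:R * (1 + 1))^-1)); last first.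
    by apply: two_inv_gen.
  apply: v1_mul; first by apply: v1_add; [exact: v1_ttX|exact: v1_ttXV].
  apply: v1_inv; last by rewrite mulf_neq0.
  apply: v1_mul; first exact: v1_nat.
  apply: v1_add; [exact: v1_tt|exact: v1_ttinv].
- rewrite -signr_odd ho expr0 !mul1r divM_gen.
  apply: (@v1_eq _ (wj%:R * wj%:R^-1)); last by rewrite mulfV.
  apply: v1_mul; first by change (value_at1 (mII wj) wj%:R); exact: v1_mII.
  apply: v1_inv; [exact: v1_nat| exact: hwQ].
Qed.

Lemma endprod {n} (Delta : 'I_n -> ivec) (F : {set 'I_n}) :
  (forall j, Delta j != (0, 0)) ->
  \prod_(j < n) endv Delta F j = (Of_prod Delta F)%:R / (On_prod Delta F)%:R.
Proof.
move=> hD; rewrite (bigID (fun j => j \in F)) /=.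
rewrite /Of_prod /On_prod !natr_prod -prodfV.
congr (_ * _).
- rewrite big_mkcondr; apply: eq_big => [j //|j hj]; rewrite /endv hj.
  by [].
- rewrite big_mkcondr; apply: eq_big => [j //|j hj]; rewrite /endv (negbTE hj).
  by case: ifP.
Qed.

End SEnds.

Section SComb.
Set Implicit Arguments. Unset Strict Implicit. Unset Printing Implicit Defensive.

Section Comb.
Variable R : realFieldType.
Variables (r s n : nat).
Local Notation m := (r + s)%N.
Variable Delta : 'I_n -> ivec.
Variable F : {set 'I_n}.
Local Notation crv := (curve R m n).

Lemma iso_refl (C : crv) : curve_iso C C.
Proof.
exists id, id; split => //.
- by split; exists id.
- by move=> e; split => //; left.
Qed.

Lemma iso_sym (C C' : crv) : curve_iso C C' -> curve_iso C' C.
Proof.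
move=> [sg [tau [[[sgi sgK sgKV] [taui tK tKV]] hpos hmk hen hedge]]].
exists sgi, taui; split.
- by split; [exists sg|exists tau].
- by move=> v; rewrite -{2}(sgKV v) hpos.
- by move=> i; rewrite hmk sgK.
- by move=> j; rewrite hen sgK.
- move=> e; have [hl hc] := hedge (taui e); rewrite tKV in hl hc; split => //.
  case: hc => [[hs [ht hd]]|[hs [ht hd]]].
  + by left; rewrite hs ht hd !sgK.
  + right; rewrite hs ht hd !sgK /=; split => //; split => //.
    by case: (cdir C (taui e)) => a b /=; rewrite !opprK.
Qed.

Lemma iso_trans (C1 C2 C3 : crv) : curve_iso C1 C2 -> curve_iso C2 C3 -> curve_iso C1 C3.
Proof.
move=> [sg [tau [[bs bt] hpos hmk hen hedge]]] [sg' [tau' [[bs' bt'] hpos' hmk' hen' hedge']]].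
exists (sg' \o sg), (tau' \o tau); split.
- by split; apply: bij_comp.
- by move=> v /=; rewrite hpos' hpos.
- by move=> i /=; rewrite hmk' hmk.
- by move=> j /=; rewrite hen' hen.
- move=> e /=; have [hl hc] := hedge e; have [hl' hc'] := hedge' (tau e).
  split; first by rewrite hl' hl.
  case: hc => [[hs [ht hd]]|[hs [ht hd]]]; case: hc' => [[hs' [ht' hd']]|[hs' [ht' hd']]].
  + by left; rewrite hs' ht' hd' hs ht hd.
  + by right; rewrite hs' ht' hd' hs ht hd.
  + by right; rewrite hs' ht' hd' hs ht hd.
  + left; rewrite hs' ht' hd' hs ht hd /=; split => //; split => //.
    by case: (cdir C1 e) => a b /=; rewrite !opprK.
Qed.


Lemma card_setE (T : finType) (P : pred T) : #|[set x | P x]| = \sum_(x : T) (P x : nat).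
Proof. by rewrite -sum1dep_card big_mkcond /=; apply: eq_bigr => x _; case: (P x). Qed.

Lemma count_mf (T : finType) (P : pred T) (f : T -> ivec) (a : pred ivec) :
  count a [seq f e | e <- enum T & P e] = \sum_(e : T) (P e && a (f e) : nat).
Proof.
rewrite count_map count_filter -sum1_count big_enum_cond big_mkcond /=.
by apply: eq_bigr => x _; rewrite /= andbC; case: (_ && _).
Qed.

Definition edge_cnt (C : crv) (v : 'I_(nv C)) (e : 'I_(nb C)) : nat :=
  ((csrc C e == v) + (ctgt C e == v))%N.

Lemma valenceE (C : crv) (v : 'I_(nv C)) : valence v =
  (\sum_e edge_cnt v e + #|[set j | cen C j == v]| + #|[set i | cmk C i == v]|)%N.
Proof. by rewrite /valence !card_setE -big_split. Qed.

Definition ocount (C : crv) (v : 'I_(nv C)) (a : pred ivec) (e : 'I_(nb C)) : nat :=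
  ((csrc C e == v) && a (cdir C e)) + ((ctgt C e == v) && a ((- (cdir C e).1)%R, (- (cdir C e).2)%R)).

Lemma count_out (C : crv) (v : 'I_(nv C)) (a : pred ivec) :
  count a (out_dirs Delta v) =
  (\sum_e ocount v a e + \sum_j ((cen C j == v) && a (Delta j) : nat))%N.
Proof.
by rewrite /out_dirs !count_cat !count_mf addnA -big_split.
Qed.

Definition mikhl (l : seq ivec) : nat :=
  match l with [:: u1; u2; _] => `|idet u1 u2|%N | _ => 0%N end.

Lemma mikhE (C : crv) (v : 'I_(nv C)) :
  mikh Delta v = mikhl [seq u <- out_dirs Delta v | u != (0, 0)%R].
Proof. reflexivity. Qed.

Lemma vsum_filter (l : seq ivec) : vsum [seq u <- l | u != (0, 0)%R] = vsum l.
Proof.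
elim: l => [//|x l ih] /=; case: eqP => [->|_] /=; rewrite ih //.
by case: (vsum l) => a b /=; rewrite !add0r.
Qed.

Definition dsum (l : seq ivec) : nat := \sum_(u <- l) \sum_(v <- l) `|idet u v|%N.

Lemma dsum3 a b c : vsum [:: a; b; c] = (0, 0)%R -> dsum [:: a; b; c] = (6 * `|idet a b|)%N.
Proof.
case: a => a1 a2; case: b => b1 b2; case: c => c1 c2 /= [h1 h2].
have ec1 : c1 = (- (a1 + b1))%R.
  by apply/eqP; rewrite -subr_eq0 -[X in _ == X]h1; apply/eqP; ring.
have ec2 : c2 = (- (a2 + b2))%R.
  by apply/eqP; rewrite -subr_eq0 -[X in _ == X]h2; apply/eqP; ring.
subst c1 c2.
rewrite /dsum !big_cons !big_nil /idet /=.
set x := (a1 * b2 - a2 * b1)%R.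
have e1 : (a1 * a2 - a2 * a1)%R = 0%R by ring.
have e2 : (b1 * b2 - b2 * b1)%R = 0%R by ring.
have e3 : ((- (a1 + b1)) * (- (a2 + b2)) - (- (a2 + b2)) * (- (a1 + b1)))%R = 0%R by ring.
have e4 : (b1 * a2 - b2 * a1)%R = (- x)%R by rewrite /x; ring.
have e5 : (a1 * (- (a2 + b2)) - a2 * (- (a1 + b1)))%R = (- x)%R by rewrite /x; ring.
have e6 : ((- (a1 + b1)) * a2 - (- (a2 + b2)) * a1)%R = x by rewrite /x; ring.
have e7 : (b1 * (- (a2 + b2)) - b2 * (- (a1 + b1)))%R = x by rewrite /x; ring.
have e8 : ((- (a1 + b1)) * b2 - (- (a2 + b2)) * b1)%R = (- x)%R by rewrite /x; ring.
rewrite e1 e2 e3 e4 e5 e6 e7 e8 !abszN absz0.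
lia.
Qed.

Lemma mikhl0 (l : seq ivec) : size l != 3%N -> mikhl l = 0%N.
Proof. by case: l => [|a [|b [|c [|d t]]]]. Qed.

Lemma dsum_perm (l l' : seq ivec) : perm_eq l l' -> dsum l = dsum l'.
Proof.
move=> hp; rewrite /dsum (perm_big _ hp); apply: eq_bigr => u _.
exact: perm_big.
Qed.

Lemma mikhl_perm (l l' : seq ivec) : perm_eq l l' -> vsum l = (0, 0)%R ->
  vsum l' = (0, 0)%R -> mikhl l = mikhl l'.
Proof.
move=> hp hv hv'; have hs := perm_size hp.
have [h3|h3] := eqVneq (size l) 3%N; last first.
  by rewrite !mikhl0 // -hs.
have hd := dsum_perm hp.
move: hp hv hv' hs h3 hd; case: l => [|a [|b [|c [|]]]] //; case: l' => [|x [|y [|z [|]]]] //.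
move=> _ hv hv' _ _; rewrite (dsum3 hv) (dsum3 hv') /=.
lia.
Qed.

Definition u3 (C : crv) : bool := [forall v : 'I_(nv C), has_mk v || (valence v == 3%N)].

Definition balanced (C : crv) := forall v : 'I_(nv C), vsum (out_dirs Delta v) = (0, 0)%R.

Section Iso.
Variables (C C' : crv) (sg : 'I_(nv C) -> 'I_(nv C')) (tau : 'I_(nb C) -> 'I_(nb C')).
Hypotheses (bsg : bijective sg) (btau : bijective tau)
  (hpos : forall v, cpos C' (sg v) = cpos C v)
  (hmk : forall i, cmk C' i = sg (cmk C i))
  (hen : forall j, cen C' j = sg (cen C j))
  (hedge : forall e, clen C' (tau e) = clen C e /\
           ((csrc C' (tau e) = sg (csrc C e) /\ ctgt C' (tau e) = sg (ctgt C e)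
             /\ cdir C' (tau e) = cdir C e) \/
            (csrc C' (tau e) = sg (ctgt C e) /\ ctgt C' (tau e) = sg (csrc C e)
             /\ cdir C' (tau e) = ((- (cdir C e).1)%R, (- (cdir C e).2)%R)))).

Let sg_inj := bij_inj bsg.

Lemma sumlen_iso : (\sum_e clen C' e = \sum_e clen C e)%R.
Proof.
rewrite (reindex tau (onW_bij _ btau)) /=; apply: eq_bigr => e _.
by case: (hedge e).
Qed.

Lemma has_mk_iso v : has_mk (sg v) = has_mk v.
Proof.
apply/existsP/existsP => [[i hi]|[i hi]]; exists i.
- by rewrite hmk (inj_eq sg_inj) in hi.
- by rewrite hmk (inj_eq sg_inj).
Qed.

Lemma valence_iso v : valence (sg v) = valence v.
Proof.
rewrite !valenceE; congr (_ + _ + _)%N.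
- rewrite (reindex tau (onW_bij _ btau)) /=; apply: eq_bigr => e _.
  rewrite /edge_cnt; have [_ [[-> [-> _]]|[-> [-> _]]]] := hedge e.
  + by rewrite !(inj_eq sg_inj).
  + by rewrite !(inj_eq sg_inj) addnC.
- by rewrite !card_setE; apply: eq_bigr => j _; rewrite hen (inj_eq sg_inj).
- by rewrite !card_setE; apply: eq_bigr => j _; rewrite hmk (inj_eq sg_inj).
Qed.

Lemma out_dirs_iso v : perm_eq (out_dirs Delta (sg v)) (out_dirs Delta v).
Proof.
apply/seq.permP => a; rewrite !count_out; congr (_ + _)%N.
- rewrite (reindex tau (onW_bij _ btau)) /=; apply: eq_bigr => e _.
  rewrite /ocount; have [_ [[-> [-> ->]]|[-> [-> ->]]]] := hedge e.
  + by rewrite !(inj_eq sg_inj).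
  + rewrite !(inj_eq sg_inj) addnC /=; congr (_ + _)%N.
    by case: (cdir C e) => x y /=; rewrite !opprK.
- by apply: eq_bigr => j _; rewrite hen (inj_eq sg_inj).
Qed.

Lemma mikh_iso v : balanced C -> balanced C' -> mikh Delta (sg v) = mikh Delta v.
Proof.
move=> hb hb'; rewrite !mikhE; apply: mikhl_perm.
- apply: perm_filter; exact: out_dirs_iso.
- by rewrite vsum_filter hb'.
- by rewrite vsum_filter hb.
Qed.

Lemma mdesc_iso : balanced C -> balanced C' -> mdesc Delta C' = mdesc Delta C.
Proof.
move=> hb hb'; rewrite /mdesc (reindex sg (onW_bij _ bsg)) /=.
apply: eq_big => [v|v _]; first by rewrite has_mk_iso valence_iso.
exact: mikh_iso.
Qed.

Lemma u3_iso : u3 C' = u3 C.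
Proof.
have [sgi sgK sgKV] := bsg.
apply/forallP/forallP => h v.
- by have := h (sg v); rewrite has_mk_iso valence_iso.
- by rewrite -(sgKV v) has_mk_iso valence_iso.
Qed.

End Iso.

Lemma iso_unpack (C C' : crv) : curve_iso C C' ->
  exists sg tau, [/\ bijective sg /\ bijective tau,
        (forall v, cpos C' (sg v) = cpos C v),
        (forall i, cmk C' i = sg (cmk C i)),
        (forall j, cen C' j = sg (cen C j)) &
        (forall e, clen C' (tau e) = clen C e /\
           ((csrc C' (tau e) = sg (csrc C e) /\ ctgt C' (tau e) = sg (ctgt C e)
             /\ cdir C' (tau e) = cdir C e) \/
            (csrc C' (tau e) = sg (ctgt C e) /\ ctgt C' (tau e) = sg (csrc C e)
             /\ cdir C' (tau e) = ((- (cdir C e).1)%R, (- (cdir C e).2)%R))))].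
Proof. by []. Qed.

Lemma sumlenI (C C' : crv) : curve_iso C C' -> (\sum_e clen C' e = \sum_e clen C e)%R.
Proof.
move=> /iso_unpack [sg [tau [[bs bt] hp hm he hed]]].
exact: (sumlen_iso bt hed).
Qed.

Lemma u3I (C C' : crv) : curve_iso C C' -> u3 C' = u3 C.
Proof.
move=> /iso_unpack [sg [tau [[bs bt] hp hm he hed]]].
exact: (u3_iso bs bt hm he hed).
Qed.

Lemma mdescI (C C' : crv) : curve_iso C C' -> balanced C -> balanced C' ->
  mdesc Delta C' = mdesc Delta C.
Proof.
move=> /iso_unpack [sg [tau [[bs bt] hp hm he hed]]].
exact: (mdesc_iso bs bt hm he hed).
Qed.

Definition isob (C C' : crv) : bool :=
  if excluded_middle_informative (curve_iso C C') then true else false.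

Lemma isobP C C' : reflect (curve_iso C C') (isob C C').
Proof. by rewrite /isob; case: excluded_middle_informative => h; constructor. Qed.

Lemma sum_iso0 (C : crv) (L : seq crv) :
  List.Forall (fun D => ~ curve_iso C D) L -> (\sum_(D <- L) (isob C D : nat) = 0)%N.
Proof.
elim: L => [|D L ih] h; first by rewrite big_nil.
inversion h; subst; rewrite big_cons ih //.
by case: isobP.
Qed.

Lemma sum_iso1 (C : crv) (L : seq crv) :
  List.ForallOrdPairs (fun A B => ~ curve_iso A B) L ->
  (exists2 D, List.In D L & curve_iso C D) -> (\sum_(D <- L) (isob C D : nat) = 1)%N.
Proof.
elim: L => [|D0 L ih] hf [D hin hiso]; first by case: hin.
inversion hf; subst; rewrite big_cons.
case: isobP => hC.
- rewrite sum_iso0 //; apply: List.Forall_impl H1 => B hB hCB.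
  apply: hB; apply: iso_trans (iso_sym hC) hCB.
- case: hin => [eD|hin]; first by subst.
  by rewrite ih //; exists D.
Qed.

Lemma eq_big_In (T : Type) (L : seq T) (g g' : T -> nat) :
  (forall C, List.In C L -> g C = g' C) -> (\sum_(C <- L) g C = \sum_(C <- L) g' C)%N.
Proof.
elim: L => [|x L ih] h; first by rewrite !big_nil.
rewrite !big_cons h /=; last by left.
by rewrite ih // => C hC; apply: h; right.
Qed.

Lemma double_count (L1 L2 : seq crv) (u : crv -> bool) (f : crv -> nat) :
  List.ForallOrdPairs (fun A B => ~ curve_iso A B) L1 ->
  List.ForallOrdPairs (fun A B => ~ curve_iso A B) L2 ->
  (forall C, List.In C L1 -> u C -> exists2 D, List.In D L2 & curve_iso C D) ->
  (forall D, List.In D L2 -> exists2 C, List.In C L1 & curve_iso D C) ->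
  (forall C D, List.In C L1 -> List.In D L2 -> curve_iso C D -> u C /\ f C = f D) ->
  (\sum_(C <- L1) (u C * f C) = \sum_(D <- L2) f D)%N.
Proof.
move=> hf1 hf2 h1 h2 h3.
transitivity (\sum_(C <- L1) \sum_(D <- L2) (u C * f C * isob C D))%N.
  apply: eq_big_In => C hC; rewrite -big_distrr /=.
  case hu: (u C); last by rewrite !mul0n.
  by rewrite sum_iso1 ?muln1 //; apply: h1.
rewrite exchange_big /=.
apply: eq_big_In => D hD.
transitivity (\sum_(C <- L1) (f D * isob D C))%N.
  apply: eq_big_In => C hC.
  case: (isobP C D) => hCD; case: (isobP D C) => hDC.
  - by have [-> ->] := h3 _ _ hC hD hCD; rewrite !muln1 mul1n.
  - by case: hDC; apply: iso_sym.
  - by case: hCD; apply: iso_sym.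
  - by rewrite !muln0.
by rewrite -big_distrr /= sum_iso1 ?muln1 //; apply: h2.
Qed.

Definition bump (C : crv) (e0 : 'I_(nb C)) (k : nat) : crv :=
  @Curve R m n (nv C) (nb C) (csrc C) (ctgt C) (cdir C)
    (fun e => clen C e + (e == e0)%:R * k%:R)%R (cpos C) (cmk C) (cen C).
Arguments bump : clear implicits.

Lemma bump_curve (C : crv) e0 k : cdir C e0 = (0, 0)%R -> is_curve Delta C -> is_curve Delta (bump C e0 k).
Proof.
move=> h0 [[hnv hconn] hl hp hb hv]; split.
- exact: (conj hnv hconn).
- move=> e /=; apply: ltr_wpDr (hl e).
  by rewrite mulr_ge0 // ler0n.
- move=> e /=; rewrite hp; case: (eqVneq e e0) => [->|ne].
  + by rewrite h0 /= !mulr0.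
  + by rewrite mul0r addr0.
- exact: hb.
- exact: hv.
Qed.

Lemma bump_refined (C : crv) e0 k : refined_desc C -> refined_desc (bump C e0 k).
Proof. exact. Qed.

Lemma bump_passes (C : crv) e0 k P q : passes Delta F C P q -> passes Delta F (bump C e0 k) P q.
Proof. exact. Qed.

Lemma sumlen_bump (C : crv) e0 k :
  (\sum_e clen (bump C e0 k) e = \sum_e clen C e + k%:R)%R.
Proof.
rewrite /= big_split /=; congr (_ + _)%R.
rewrite (bigD1 e0) //= eqxx mul1r big1 ?addr0 // => e ne.
by rewrite (negbTE ne) mul0r.
Qed.

Lemma in_map_In (T : Type) (L : seq T) (f : T -> R) x : List.In x L -> f x \in map f L.
Proof.
elim: L => [//|y L ih] /= [->|h]; rewrite inE; first by rewrite eqxx.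
by rewrite ih ?orbT.
Qed.

Lemma no_zero_dir (S : crv -> Prop) (L : seq crv)
  (hS : forall C e0 k, cdir C e0 = (0, 0)%R -> S C -> S (bump C e0 k))
  (hF : List.Forall S L)
  (hcov : forall C, S C -> exists2 C', List.In C' L & curve_iso C C')
  C (hC : List.In C L) e0 : cdir C e0 != (0, 0)%R.
Proof.
apply/negP => /eqP h0.
have SC : S C by move: hF; rewrite List.Forall_forall; apply.
set base := (\sum_e clen C e)%R.
pose s1 := [seq (base + k%:R)%R | k <- iota 0 (size L).+1].
have hu : uniq s1.
  rewrite map_inj_uniq ?iota_uniq // => x y /addrI /eqP.
  by rewrite eqr_nat => /eqP.
have hsub : {subset s1 <= map (fun D => \sum_e clen D e)%R L}.
  move=> z /mapP [k _ ->].
  have [D hD hiso] := hcov _ (hS C e0 k h0 SC).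
  have := sumlenI hiso; rewrite sumlen_bump => <-.
  exact: in_map_In.
have := uniq_leq_size hu hsub.
by rewrite !size_map size_iota ltnn.
Qed.

Lemma size_mf (T : finType) (P : pred T) (f : T -> ivec) :
  size [seq f e | e <- enum T & P e] = #|[set e | P e]|.
Proof.
rewrite -count_predT count_mf card_setE; apply: eq_bigr => e _.
by rewrite andbT.
Qed.

Lemma mikh0 (C : crv) (v : 'I_(nv C)) : is_curve Delta C ->
  (forall e, cdir C e != (0, 0)%R) -> (forall j, Delta j != (0, 0)%R) ->
  ~~ has_mk v -> valence v != 3%N -> mikh Delta v = 0%N.
Proof.
move=> [_ _ _ _ hv] hd hD hm h3.
have hv3 := hv v.
rewrite mikhE; apply: mikhl0.
have -> : [seq u <- out_dirs Delta v | u != (0, 0)%R] = out_dirs Delta v.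
  apply/all_filterP/allP => u; rewrite !mem_cat => /or3P [|| ] /mapP [x _ ->] //.
  move: (hd x); case: (cdir C x) => a b; rewrite !xpair_eqE !oppr_eq0; exact.
have hmk0 : #|[set i | cmk C i == v]| = 0%N.
  apply/eqP; rewrite cards_eq0; apply/eqP/setP => i; rewrite !inE.
  by apply/negP => hi; move/existsP: hm; apply; exists i.
move: h3 hv3; rewrite /valence hmk0 addn0 /out_dirs !size_cat !size_mf.
lia.
Qed.

End Comb.

End SComb.

Section SMain.
Set Implicit Arguments. Unset Strict Implicit. Unset Printing Implicit Defensive.
Local Open Scope ring_scope.

Lemma v1_sum_In (I : Type) (L : seq I) (f : I -> K) (c : I -> rat) :
  (forall i, List.In i L -> value_at1 (f i) (c i)) ->
  value_at1 (\sum_(i <- L) f i) (\sum_(i <- L) c i).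
Proof.
elim: L => [|x L ih] h.
- rewrite !big_nil; exact: (v1_nat 0).
- rewrite !big_cons; apply: v1_add; first by apply: h; left.
  by apply: ih => i hi; apply: h; right.
Qed.

Section Main.
Variable R : realFieldType.
Variables (r s n : nat).
Local Notation m := (r + s)%N.
Variable Delta : 'I_n -> ivec.
Variable F : {set 'I_n}.
Local Notation crv := (curve R m n).

Lemma has_mkE (C : crv) (v : 'I_(nv C)) : has_mk v = has_real_mk v || has_cplx_mk v.
Proof.
apply/existsP/orP => [[i hi]|[/existsP [i /andP [_ hi]]|/existsP [i /andP [_ hi]]]].
- by case hr: (is_real_mk i); [left|right]; apply/existsP; exists i; rewrite hr.
- by exists i.
- by exists i.
Qed.

Definition vval (C : crv) (v : 'I_(nv C)) : rat :=
  if has_mk v then 1 else (mikh Delta v)%:R.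

Lemma v1_mvert (C : crv) (v : 'I_(nv C)) : value_at1 (mvert Delta v) (vval v).
Proof.
rewrite /mvert /vval has_mkE.
case: (has_real_mk v) => /=; first exact: v1_one.
case: (has_cplx_mk v) => /=; first exact: v1_mIII.
exact: v1_mII.
Qed.

Lemma v1_mC (C : crv) : (forall j, Delta j != (0, 0)) ->
  value_at1 (mC Delta F C) ((\prod_(j < n) endv Delta F j) * \prod_(v < nv C) vval v).
Proof.
move=> hD; rewrite /mC; apply: v1_mul.
- apply: v1_prod => j _; exact: v1_mend.
- apply: v1_prod => v _; exact: v1_mvert.
Qed.

Lemma prod_vval (C : crv) : is_curve Delta C -> (forall e, cdir C e != (0, 0)) ->
  (forall j, Delta j != (0, 0)) ->
  \prod_(v < nv C) vval v = ((u3 C) * mdesc Delta C)%N%:R.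
Proof.
move=> hc hd hD; case hu: (u3 C).
- rewrite mul1n /mdesc natr_prod [RHS]big_mkcond /=; apply: eq_bigr => v _.
  rewrite /vval; case hm: (has_mk v) => //=.
  by have := forallP hu v; rewrite hm /= => ->.
- rewrite mul0n; move/negbT: hu; rewrite negb_forall => /existsP [v hv].
  rewrite negb_or in hv; case/andP: hv => hm h3.
  rewrite (bigD1 v) //= /vval (negbTE hm) (mikh0 hc hd hD hm h3) mul0r.
  reflexivity.
Qed.

End Main.

Lemma final_field (Fl : fieldType) (G I OO X : Fl) : G != 0 -> I != 0 ->
  G^-1 * (OO * X) = OO * I * (I^-1 * G^-1 * X).
Proof. move=> hG hI. field. by rewrite hG hI. Qed.


End SMain.

Local Open Scope ring_scope.

Theorem lemma3p25 (R : realFieldType) (r s n : nat) (Delta : 'I_n -> ivec)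
    (F : {set 'I_n})
    (HDelta : forall j, Delta j != (0, 0))
    (Hdim : (r + 2 * s + #|F| + 1)%N = n)
    (P : 'I_(r + s) -> R * R) (q : 'I_n -> R)
    (Hgp1 : gen_pos_refined Delta F P q)
    (Hgp2 : gen_pos_trop Delta F P q)
    (L1 L2 : seq (curve R (r + s) n))
    (HL1 : enumerates (fun C => [/\ is_curve Delta C, refined_desc C
                                    & passes Delta F C P q]) L1)
    (HL2 : enumerates (fun C => [/\ is_curve Delta C, trop_desc C
                                    & passes Delta F C P q]) L2) :
  value_at1 (Ndesc Delta F L1)
    ((Of_prod Delta F)%:R / (On_prod Delta F)%:R * (Ialpha Delta F)%:R
     * Ntrop Delta F L2).
Proof.
have [hF1 hP1 hc1] := HL1; have [hF2 hP2 hc2] := HL2.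
have S1L1 : forall C, List.In C L1 -> [/\ is_curve Delta C, refined_desc C & passes Delta F C P q].
  by move=> C hC; move: hF1; rewrite List.Forall_forall; apply.
have S2L2 : forall C, List.In C L2 -> [/\ is_curve Delta C, trop_desc C & passes Delta F C P q].
  by move=> C hC; move: hF2; rewrite List.Forall_forall; apply.
have nz : forall C, List.In C L1 -> forall e, cdir C e != (0, 0).
  move=> C hC e; apply: (no_zero_dir _ hF1 hc1 hC).
  move=> C' e0 k h0 [a b c]; split.
  - exact: bump_curve h0 a.
  - exact: bump_refined b.
  - exact: bump_passes c.
set OO : rat := (Of_prod Delta F)%:R / (On_prod Delta F)%:R.
have vC : forall C, List.In C L1 ->
    value_at1 (mC Delta F C) (OO * ((u3 C) * mdesc Delta C)%N%:R).
  move=> C hC; have [a _ _] := S1L1 C hC.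
  rewrite -(prod_vval a (nz C hC) HDelta) /OO -(endprod Delta F HDelta).
  exact: v1_mC.
have hG : (Gcard Delta F)%:R != 0 :> rat.
  rewrite pnatr_eq0 -lt0n; apply/card_gt0P; exists 1%g; rewrite inE.
  by apply/forallP => i; rewrite perm1 !eqxx implybT.
have hI : (Ialpha Delta F)%:R != 0 :> rat.
  rewrite pnatr_eq0 -lt0n /Ialpha big_seq_cond; apply: prodn_cond_gt0 => i /andP [hi _].
  by rewrite expn_gt0; rewrite mem_index_iota in hi; case/andP: hi => ->.
have hdc : (\sum_(C <- L1) (u3 C * mdesc Delta C) = \sum_(D <- L2) mdesc Delta D)%N.
  apply: double_count.
  - exact: hP1.
  - exact: hP2.
  - move=> C hC hu; apply: hc2; have [a b c] := S1L1 C hC; split => //; split => //.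
    by move=> v hv; have := forallP hu v; rewrite (negbTE hv) /= => /eqP.
  - move=> D hD; apply: hc1; have [a [b _] c] := S2L2 D hD; by split.
  - move=> C D hC hD hCD; have [a b c] := S1L1 C hC; have [a' b' c'] := S2L2 D hD.
    have hu3D : u3 D.
      case: b' => _ hb; apply/forallP => v; case hm: (has_mk v) => //=.
      by rewrite hb ?hm.
    split; first by rewrite -(u3I hCD).
    symmetry; apply: (mdescI hCD); [by case: a | by case: a'].
rewrite /Ndesc /Ntrop.
apply: (@v1_eq _ ((Gcard Delta F)%:R^-1 * \sum_(C <- L1) (OO * ((u3 C) * mdesc Delta C)%N%:R))).
  apply: v1_mul; first by apply: v1_inv; [exact: v1_nat|exact: hG].
  exact: v1_sum_In.
rewrite -big_distrr /= -natr_sum hdc natr_sum -/OO.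
exact: final_field hG hI.
Qed.
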